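(* Let $t\ge 4$, $r\ge 3$ and $0\le d\le r-1$ be integers. Then there exists a sufficiently small constant $c=c(t,r)>0$ such that $$C_r(n,S_r(d,t))\ge \min\left\{c\,n^{\frac{1}{2(r-d)+1}},\ c\,n^{\frac{1}{d+1}}\right\}.$$
   Context: An $r$-graph is an $r$-uniform hypergraph; $K_n^{(r)}$ is the complete $r$-graph on $n$ vertices. A copy of an $r$-graph $H$ in $K_n^{(r)}$ is a subhypergraph isomorphic to $H$. An $(n,r,H)$-local coloring with $k$ colors is a family of edge-colorings $f_v:E(K_n^{(r)})\to[k]$, one per vertex $v$, such that for every copy $T$ of $H$ there is $u\in V(T)$ with $f_u$ injective on $E(T)$. $C_r(n,H)$ is the minimum such $k$. A sunflower $S_r(d,m)$ is an $r$-graph with $m$ edges $e_1,\dots,e_m$ such that $e_i\cap e_j=D$ for all distinct $i,j$, where $D$ is a fixed set of $d$ vertices (the core). *)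

(* Defs.v *)
From mathcomp Require Import all_boot.
From Stdlib Require Import ClassicalDescription.

Unset Printing Implicit Defensive.

(* Vertices of K_n^(r) are 'I_n; edges are the r-subsets of 'I_n. *)
Definition rsets (n r : nat) : {set {set 'I_n}} := [set e : {set 'I_n} | #|e| == r].

(* A family E of edges forms a sunflower S_r(d,m): it has m edges and there is a
   core D of d vertices with e :&: e' = D for all distinct e, e' in E.
   (Edge size r is enforced by E \subset rsets n r below.) *)
Definition is_sunflower (T : finType) (d m : nat) (E : {set {set T}}) : Prop :=
  #|E| = m /\
  exists D : {set T}, #|D| = d /\
    forall e e', e \in E -> e' \in E -> e != e' -> e :&: e' = D.

Definition sunflower_copy (n r d m : nat) (E : {set {set 'I_n}}) : Prop :=
  E \subset rsets n r /\ is_sunflower _ d m E.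

Definition vert (n : nat) (E : {set {set 'I_n}}) : {set 'I_n} :=
  \bigcup_(e in E) e.

(* An (n, r, S_r(d,m))-local coloring with k colors: one edge-coloring
   f v : E(K_n^(r)) -> [k] per vertex v (colors 0..k-1; values off the r-sets
   are irrelevant), such that every copy T has a vertex u in V(T) with f u
   injective on E(T). *)
Definition local_coloring (n r d m k : nat) (f : 'I_n -> {set 'I_n} -> nat) : Prop :=
  (forall v e, e \in rsets n r -> f v e < k) /\
  forall E, sunflower_copy n r d m E ->
    exists2 u, u \in vert n E & {in E &, injective (f u)}.

Definition has_local_coloring (n r d m k : nat) : Prop :=
  exists f, local_coloring n r d m k f.

Definition has_local_coloringb (n r d m : nat) : pred nat :=
  fun k => if excluded_middle_informative (has_local_coloring n r d m k)
           then true else false.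

(* C_r(n, S_r(d,m)) = the minimum k admitting a local coloring
   (set to 0 by convention if no such k exists; this never happens in the
   range of the theorem). *)
Definition C_sun (n r d m : nat) : nat :=
  match excluded_middle_informative (exists k, has_local_coloringb n r d m k) with
  | left H => ex_minn H
  | right _ => 0
  end.

(* Main.v *)
Require Import Defs.
From mathcomp Require Import all_boot.
From Stdlib Require Import Reals.
From mathcomp Require Import zify.
From Stdlib Require Import Lra ClassicalDescription.
From mathcomp Require Import all_boot.
From mathcomp Require Import zify.

Section Helpers.
Set Implicit Arguments. Unset Strict Implicit.

Lemma sub_card (T : finType) (A : {set T}) m :
  m <= #|A| -> exists2 B : {set T}, B \subset A & #|B| = m.
Proof.
elim: m => [|m IH] Hm; first by exists set0; rewrite ?sub0set ?cards0.
have [B BA cB] := IH (ltnW Hm).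
have : 0 < #|A :\: B| by rewrite cardsDS // cB subn_gt0.
rewrite card_gt0 => /set0Pn [x]; rewrite inE => /andP [xB xA].
exists (x |: B); first by rewrite subUset sub1set xA BA.
by rewrite cardsU1 xB cB.
Qed.

Lemma carve (T : finType) (s q : nat) (X : {set T}) : 0 < s -> s * q <= #|X| ->
  exists F : {set {set T}}, [/\ #|F| = q,
    forall Y, Y \in F -> Y \subset X /\ #|Y| = s &
    forall Y Z, Y \in F -> Z \in F -> Y != Z -> [disjoint Y & Z]].
Proof.
move=> s0; elim: q X => [|q IH] X Hq.
  by exists set0; split; rewrite ?cards0 // => Y; rewrite inE.
have [Y YX cY] := sub_card (leq_trans (leq_pmulr _ (ltn0Sn q)) Hq).
have HX' : s * q <= #|X :\: Y| by rewrite cardsDS // cY; move: Hq; rewrite mulnS; lia.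
have [F [cF FX Fd]] := IH _ HX'.
have YnF : Y \notin F.
  apply/negP => /FX [/subsetP sY _].
  have : 0 < #|Y| by rewrite cY.
  rewrite card_gt0 => /set0Pn [y yY].
  by move: (sY y yY); rewrite inE yY.
have dYF : forall Z, Z \in F -> [disjoint Y & Z].
  move=> Z /FX [sZ _]; move: sZ; rewrite subsetD => /andP [_ h].
  by rewrite disjoint_sym.
exists (Y |: F); split.
- by rewrite cardsU1 YnF cF.
- move=> Z /setU1P [-> | /FX [sZ cZ]]; first by split.
  by split=> //; apply: (subset_trans sZ); rewrite subsetDl.
- move=> Z W /setU1P [-> | ZF] /setU1P [-> | WF]; rewrite ?eqxx //.
  + by move=> _; apply: dYF.
  + by move=> _; rewrite disjoint_sym; apply: dYF.
  + by apply: Fd.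
Qed.

Lemma cardsum (T : finType) (A : {set T}) (P : pred T) :
  #|[set x in A | P x]| = \sum_(x in A) P x.
Proof.
rewrite -sum1_card big_mkcond /= [RHS]big_mkcond /=; apply: eq_bigr => x _.
by rewrite inE; case: (x \in A); case: (P x).
Qed.

Lemma pigeon1 (I : finType) (A : {set I}) (c : I -> nat) (k : nat) :
  0 < k -> (forall i, i \in A -> c i < k) ->
  exists col, #|A| <= k * #|[set i in A | c i == col]|.
Proof.
case: k => [//|k] _ Hc.
pose B (j : 'I_k.+1) := [set i in A | c i == j].
pose j0 := [arg max_(j > ord0) #|B j|].
exists (nat_of_ord j0).
have -> : #|A| = \sum_(j < k.+1) #|B j|.
  rewrite /B.
  under eq_bigr => j _ do rewrite cardsum.
  rewrite exchange_big /= -sum1_card; apply: eq_bigr => i iA.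
  rewrite (bigD1 (Ordinal (Hc i iA))) //= eqxx big1 // => j /negP nj.
  by apply/eqP; rewrite eqb0; apply/negP => /eqP Hj; apply: nj; apply/eqP/val_inj.
apply: (@leq_trans (\sum_(j < k.+1) #|B j0|)).
  by apply: leq_sum => j _; rewrite /j0; case: arg_maxnP => // j1 _ H; apply: H.
by rewrite sum_nat_const card_ord.
Qed.

Lemma refine (I V : finType) (k : nat) (g : V -> I -> nat) (ws : seq V) (A : {set I}) :
  0 < k -> (forall v i, i \in A -> g v i < k) ->
  exists2 B : {set I}, B \subset A &
    #|A| <= k ^ size ws * #|B| /\
    (forall v, v \in ws -> forall i j, i \in B -> j \in B -> g v i = g v j).
Proof.
move=> k0; elim: ws A => [|v ws IH] A Hg.
  by exists A => //; split; rewrite ?expn0 ?mul1n.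
have [col Hcol] := @pigeon1 _ A (g v) k k0 (fun i => Hg v i).
pose B1 := [set i in A | g v i == col].
have sB1 : B1 \subset A by apply/subsetP => i; rewrite inE => /andP [].
have [B sB [cB HB]] := IH B1 (fun w i iB => Hg w i (subsetP sB1 i iB)).
exists B; first exact: subset_trans sB sB1.
split.
  rewrite /= expnS -mulnA; apply: (leq_trans Hcol); by rewrite leq_mul2l cB orbT.
move=> w; rewrite inE => /orP [/eqP -> | wws] i j iB jB; last exact: HB.
have := subsetP sB i iB; have := subsetP sB j jB; rewrite !inE => /andP [_ /eqP ->] /andP [_ /eqP ->] //.
Qed.

Lemma mono_pairs (I : finType) (S : {set I}) (c : I -> nat) (k : nat) :
  (forall i, i \in S -> c i < k) ->
  #|S| <= k.+1 + #|[set pq in setX S S | (pq.1 != pq.2) && (c pq.1 == c pq.2)]|.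
Proof.
move=> Hc.
pose Sing := [set p in S | [forall q in S, (q != p) ==> (c q != c p)]].
have cS : #|Sing| <= k.+1.
  have -> : k.+1 = #|'I_k.+1| by rewrite card_ord.
  apply: (@leq_card_in _ _ (fun p => inord (c p) : 'I_k.+1)) => p q.
  rewrite !inE => /andP [pS /forall_inP Hp] /andP [qS _] /= Heq.
  have e : c p = c q.
    have := congr1 (@nat_of_ord _) Heq; rewrite /= !inordK // ?ltnS; apply: ltnW; exact: Hc.
  apply/eqP; apply: contraT => npq.
  by have := Hp q qS; rewrite eq_sym npq /= e eqxx.
pose PP := [set pq in setX S S | (pq.1 != pq.2) && (c pq.1 == c pq.2)].
pose w (p : I) := odflt p [pick q in S | (q != p) && (c q == c p)].
have cD : #|S :\: Sing| <= #|PP|.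
  rewrite -(@card_in_imset _ _ (fun p => (p, w p)) (S :\: Sing)); last first.
    by move=> p q _ _ [].
  apply: subset_leq_card; apply/subsetP => x /imsetP [p].
  rewrite !inE => /andP [nS pS] ->.
  move: nS; rewrite pS /= negb_forall_in => /existsP [q /andP [qS]].
  rewrite negb_imply negbK => /andP [qp cq].
  rewrite /w; case: pickP => [q' /andP [q'S /andP [q'p cq']] | /(_ q)]; last by rewrite qS qp cq.
  by rewrite q'S eq_sym q'p (eqP cq') eqxx.
rewrite -/PP; have := cardsID Sing S.
have : #|S :&: Sing| <= #|Sing| by apply: subset_leq_card; rewrite subsetIr.
lia.
Qed.

Lemma double_count (V I : finType) (U : {set V}) (PP : {set I}) (good : V -> I -> bool) a pq0 :
  pq0 \in PP ->
  (forall u, u \in U -> a <= #|[set pq in PP | good u pq]|) ->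
  exists2 pq, pq \in PP & #|U| * a <= #|PP| * #|[set u in U | good u pq]|.
Proof.
move=> p0 Ha.
pose X pq := [set u in U | good u pq].
pose m := [arg max_(pq > pq0 in PP) #|X pq|].
exists m; first by rewrite /m; case: arg_maxnP.
have H1 : #|U| * a <= \sum_(pq in PP) #|X pq|.
  rewrite /X; under eq_bigr => pq _ do rewrite cardsum.
  rewrite exchange_big /= -sum_nat_const; apply: leq_sum => u uU.
  by rewrite -cardsum; apply: Ha.
apply: (leq_trans H1).
apply: (@leq_trans (\sum_(pq in PP) #|X m|)).
  by apply: leq_sum => pq pqP; rewrite /m; case: arg_maxnP => // j1 _ H; apply: H.
by rewrite sum_nat_const.
Qed.

Lemma sunflower_of (n r d t : nat) (D : {set 'I_n}) (Pet : {set {set 'I_n}}) :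
  #|D| = d -> d <= r ->
  (forall p, p \in Pet -> #|p| = r - d /\ [disjoint D & p]) ->
  (forall p q, p \in Pet -> q \in Pet -> p != q -> [disjoint p & q]) ->
  #|Pet| = t ->
  sunflower_copy n r d t [set D :|: p | p in Pet].
Proof.
move=> cD dr HP Hd cP.
have inj : {in Pet &, injective (fun p => D :|: p)}.
  move=> p q pP qP /= e.
  have [_ dp] := HP p pP; have [_ dq] := HP q qP.
  have -> : p = (D :|: p) :\: D by rewrite setDUl setDv set0U; apply/esym/setDidPl; rewrite disjoint_sym.
  by rewrite e setDUl setDv set0U; apply/setDidPl; rewrite disjoint_sym.
split.
  apply/subsetP => e /imsetP [p pP ->]; rewrite inE.
  have [cp dp] := HP p pP.
  by rewrite cardsU cD cp (disjoint_setI0 dp) cards0 subn0 subnKC.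
split; first by rewrite card_in_imset.
exists D; split=> // e e' /imsetP [p pP ->] /imsetP [q qP ->] ne.
have npq : p != q by apply: contraNneq ne => ->.
by rewrite -setUIr (disjoint_setI0 (Hd p q pP qP npq)) setU0.
Qed.

Lemma vert_of (n : nat) (D : {set 'I_n}) (Pet : {set {set 'I_n}}) u :
  u \in vert n [set D :|: p | p in Pet] ->
  u \in D \/ exists2 p, p \in Pet & u \in p.
Proof.
move=> /bigcupP [e /imsetP [p pP ->]]; rewrite inE => /orP [uD | up].
  by left.
by right; exists p.
Qed.

Lemma setU_inj (n : nat) (D p q : {set 'I_n}) :
  [disjoint D & p] -> [disjoint D & q] -> D :|: p = D :|: q -> p = q.
Proof.
move=> dp dq e.
have -> : p = (D :|: p) :\: D by rewrite setDUl setDv set0U; apply/esym/setDidPl; rewrite disjoint_sym.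
by rewrite e setDUl setDv set0U; apply/setDidPl; rewrite disjoint_sym.
Qed.

Lemma card_DU (n : nat) (D p : {set 'I_n}) :
  [disjoint D & p] -> #|D :|: p| = #|D| + #|p|.
Proof. by move=> dp; rewrite cardsU (disjoint_setI0 dp) cards0 subn0. Qed.

Lemma main_comb n r d t k f : 4 <= t -> d < r -> local_coloring n r d t k f -> 0 < k ->
  n < d + (r - d) * (k ^ d * (2 * k + 4)) + 4 * (k + 2) * ((r - d) * (k ^ (2 * (r - d)) * t)).
Proof.
move=> t4 dr [fk Hloc] k0; rewrite ltnNge; apply/negP => Hn.
set s := r - d in Hn *.
have s0 : 0 < s by rewrite /s subn_gt0.
set A := s * (k ^ (2 * s) * t) in Hn.
have Hd : d <= #|[set: 'I_n]| by rewrite cardsT card_ord; lia.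
have [D _ cD] := sub_card Hd.
have cCD : #|~: D| = n - d by have := cardsC D; rewrite card_ord cD; lia.
have Hq : s * (k ^ d * (2 * k + 4)) <= #|~: D| by rewrite cCD; lia.
have [Fam [cFam FamP FamD]] := carve s0 Hq.
have dDY : forall Y : {set 'I_n}, Y \subset ~: D -> [disjoint D & Y].
  move=> Y sY; have := sY; rewrite -disjoints_subset => h.
  by rewrite disjoint_sym.
have edge : forall Y : {set 'I_n}, Y \subset ~: D -> #|Y| = s -> D :|: Y \in rsets n r.
  by move=> Y sY cY; rewrite inE card_DU ?dDY // cD cY /s; apply/eqP; lia.
have FamC : forall v Y, Y \in Fam -> f v (D :|: Y) < k.
  by move=> v Y /FamP [sY cY]; apply: fk; apply: edge.
have [S0 sS0 [cS0 HS0]] := @refine _ _ k (fun v Y => f v (D :|: Y)) (enum D) Fam k0 FamC.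
rewrite -cardE cD cFam in cS0.
have cS0' : 2 * k + 4 <= #|S0| by rewrite -(@leq_pmul2l (k ^ d)) // expn_gt0 k0.
have [S sS cS] := sub_card cS0'.
have SFam : forall Y, Y \in S -> Y \in Fam by move=> Y YS; apply: (subsetP sS0); apply: (subsetP sS).
pose PP := [set pq in setX S S | pq.1 != pq.2].
pose good (u : 'I_n) (pq : {set 'I_n} * {set 'I_n}) :=
  [&& u \notin pq.1, u \notin pq.2 & f u (D :|: pq.1) == f u (D :|: pq.2)].
have Hgood : forall u, u \in ~: D -> k + 2 <= #|[set pq in PP | good u pq]|.
  move=> u uD.
  pose S' := S :\: [set p : {set 'I_n} | u \in p].
  have c1 : #|S :&: [set p : {set 'I_n} | u \in p]| <= 1.
    apply/card_le1_eqP => p q pA qA; move: pA qA; rewrite !inE => /andP [pS up] /andP [qS uq].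
    apply/eqP; apply: contraT => npq.
    move/disjoint_setI0: (FamD q p (SFam q qS) (SFam p pS) npq) => h.
    have : u \in q :&: p by rewrite inE up uq.
    by rewrite h inE.
  have cS' : 2 * k + 3 <= #|S'| by have := cardsID [set p : {set 'I_n} | u \in p] S; rewrite -/S'; lia.
  have S'S : forall p, p \in S' -> p \in S by move=> p; rewrite inE => /andP [].
  have := @mono_pairs _ S' (fun p => f u (D :|: p)) k (fun p pS' => FamC u p (SFam p (S'S p pS'))).
  move=> Hm.
  have sub : [set pq in setX S' S' | (pq.1 != pq.2) && (f u (D :|: pq.1) == f u (D :|: pq.2))]
      \subset [set pq in PP | good u pq].
    apply/subsetP => [[p q]]; rewrite !inE /= => /andP [/andP [/andP [npu pS] /andP [nqu qS]] /andP [npq e]].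
    by rewrite pS qS npq /good /= npu nqu e.
  have := subset_leq_card sub; lia.
have : 1 < #|S| by rewrite cS; lia.
case/card_gt1P => p0 [q0 [p0S q0S npq0]].
have p0P : (p0, q0) \in PP by rewrite !inE /= p0S q0S npq0.
have [[b1 b2] bP HX] := @double_count _ _ (~: D) PP good (k + 2) (p0, q0) p0P Hgood.
set X := [set u in ~: D | good u (b1, b2)] in HX.
have cPP : #|PP| <= (2 * k + 4) * (2 * k + 4).
  rewrite -cS -cardsX; apply: subset_leq_card; apply/subsetP => x; rewrite inE => /andP [].
  by [].
have HA : A <= #|X|.
  have h1 : (n - d) * (k + 2) <= (2 * k + 4) * (2 * k + 4) * #|X|.
    rewrite -cCD; apply: (leq_trans HX); by rewrite leq_mul2r cPP orbT.
  have h2 : 4 * (k + 2) * A <= n - d by lia.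
  have h3 : (4 * (k + 2) * (k + 2)) * A <= (4 * (k + 2) * (k + 2)) * #|X|.
    have e : (2 * k + 4) * (2 * k + 4) = 4 * (k + 2) * (k + 2) by nia.
    rewrite -e; apply: leq_trans h1; rewrite e mulnAC leq_mul2r h2 orbT //.
  have pos : 0 < 4 * (k + 2) * (k + 2) by rewrite !muln_gt0 !addn_gt0 orbT.
  by rewrite leq_pmul2l in h3.
move: bP; rewrite !inE /= => /andP [/andP [b1S b2S] nb12].
have [b1D cb1] := FamP b1 (SFam b1 b1S).
have [b2D cb2] := FamP b2 (SFam b2 b2S).
have XP : forall u, u \in X -> [/\ u \in ~: D, u \notin b1, u \notin b2 &
    f u (D :|: b1) = f u (D :|: b2)].
  by move=> u; rewrite !inE /good /= => /andP [-> /and3P [-> -> /eqP ->]].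
have [G [cG GP GD]] := carve s0 HA.
have GD' : forall Y, Y \in G -> Y \subset ~: D.
  move=> Y /GP [/subsetP sY _]; apply/subsetP => u /sY uX.
  by have [] := XP u uX.
have GC : forall v Y, Y \in G -> f v (D :|: Y) < k.
  by move=> v Y YG; apply: fk; apply: edge; [exact: GD' | have [] := GP Y YG].
have [G' sG' [cG' HG']] := @refine _ _ k (fun v Y => f v (D :|: Y)) (enum (b1 :|: b2)) G k0 GC.
rewrite -cardE cG in cG'.
have cW : #|b1 :|: b2| <= 2 * s by rewrite cardsU cb1 cb2 mul2n -addnn leq_subr.
have tG' : t <= #|G'|.
  have h : k ^ (2 * s) * t <= k ^ (2 * s) * #|G'|.
    apply: (leq_trans cG'); rewrite leq_mul2r leq_pexp2l ?orbT //.
  by rewrite leq_pmul2l ?expn_gt0 ?k0 in h.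
have t2 : t - 2 <= #|G'| by apply: leq_trans (leq_subr _ _) tG'.
have [Ta sTa cTa] := sub_card t2.
have TaG : forall Y, Y \in Ta -> Y \in G by move=> Y YT; apply: (subsetP sG'); apply: (subsetP sTa).
have TaX : forall Y, Y \in Ta -> Y \subset X by move=> Y /TaG /GP [].
have TaD : forall Y, Y \in Ta -> [disjoint D & Y] by move=> Y /TaG /GD' /dDY.
have Tab : forall Y, Y \in Ta -> [disjoint Y & b1] /\ [disjoint Y & b2].
  move=> Y /TaX /subsetP sY; split; rewrite disjoints_subset; apply/subsetP => u /sY uX;
  have [_ h1 h2 _] := XP u uX; by rewrite inE.
have ne0 : forall Y : {set 'I_n}, #|Y| = s -> [disjoint Y & Y] -> False.
  move=> Y cY /disjoint_setI0; rewrite setIid => Y0.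
  by move: cY; rewrite Y0 cards0 => s0'; rewrite -s0' in s0.
pose Pet := Ta :|: [set b1; b2].
have PetP : forall p, p \in Pet -> #|p| = r - d /\ [disjoint D & p].
  move=> p /setUP [pT | ].
    by split; [have [] := GP p (TaG p pT) | exact: TaD].
  by rewrite !inE => /orP [/eqP -> | /eqP ->]; split => //; apply: dDY.
have Db : [disjoint b1 & b2] by apply: FamD b1 b2 (SFam b1 b1S) (SFam b2 b2S) nb12.
have PetD : forall p q, p \in Pet -> q \in Pet -> p != q -> [disjoint p & q].
  move=> p q /setUP [pT | pb] /setUP [qT | qb] npq.
  - exact: GD p q (TaG p pT) (TaG q qT) npq.
  - by move: qb; rewrite !inE => /orP [/eqP -> | /eqP ->]; have [] := Tab p pT.
  - by move: pb; rewrite !inE => /orP [/eqP -> | /eqP ->]; rewrite disjoint_sym; have [] := Tab q qT.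
  - move: pb qb npq; rewrite !inE => /orP [/eqP -> | /eqP ->] /orP [/eqP -> | /eqP ->]; rewrite ?eqxx //.
      by move=> _; rewrite disjoint_sym.
have cPet : #|Pet| = t.
  have I0 : Ta :&: [set b1; b2] = set0.
    apply/setP => Y; rewrite !inE; apply/negP => /andP [YT /orP [/eqP e | /eqP e]].
      by have [h _] := Tab Y YT; apply: (ne0 b1 cb1); rewrite -{1}e.
    by have [_ h] := Tab Y YT; apply: (ne0 b2 cb2); rewrite -{1}e.
  rewrite /Pet cardsU I0 cards0 subn0 cTa cards2 nb12; clear -t4; lia.
have sf := @sunflower_of n r d t D Pet cD (ltnW dr) PetP PetD cPet.
have [u uV inj] := Hloc _ sf.
have inE' : forall p, p \in Pet -> D :|: p \in [set D :|: p | p in Pet] by move=> p pP; apply: imset_f.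
have b1P : b1 \in Pet by rewrite !inE eqxx orbT.
have b2P : b2 \in Pet by rewrite !inE eqxx !orbT.
have contr12 : f u (D :|: b1) = f u (D :|: b2) -> False.
  move=> e; have := inj _ _ (inE' _ b1P) (inE' _ b2P) e.
  move/(setU_inj (dDY _ b1D) (dDY _ b2D)) => e'.
  by rewrite e' eqxx in nb12.
case: (vert_of uV) => [uD | [p pP up]].
  apply: contr12; apply: HS0; rewrite ?mem_enum //; by apply: (subsetP sS).
case/setUP: pP => [pT | pb].
  have uX : u \in X by apply: (subsetP (TaX p pT)).
  by have [_ _ _ e] := XP u uX; apply: contr12.
have uW : u \in b1 :|: b2.
  by move: pb; rewrite !inE => /orP [/eqP <- | /eqP <-]; rewrite up ?orbT.
have : 1 < #|Ta| by rewrite cTa; clear -t4; lia.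
case/card_gt1P => a1 [a2 [a1T a2T na12]].
have uW' : u \in enum (b1 :|: b2) by rewrite mem_enum.
have e := HG' u uW' a1 a2 (subsetP sTa a1 a1T) (subsetP sTa a2 a2T).
have a1P : a1 \in Pet by rewrite inE a1T.
have a2P : a2 \in Pet by rewrite inE a2T.
have := inj _ _ (inE' _ a1P) (inE' _ a2P) e.
move/(setU_inj (TaD _ a1T) (TaD _ a2T)) => e'.
by rewrite e' eqxx in na12.
Qed.

End Helpers.


Lemma nat_bound n r d t k : d < r -> 0 < k ->
  n < d + (r - d) * (k ^ d * (2 * k + 4)) + 4 * (k + 2) * ((r - d) * (k ^ (2 * (r - d)) * t)) ->
  n <= r * (7 + 12 * t) * k ^ (maxn (d + 1) (2 * (r - d) + 1)).
Proof.
move=> dr k0 H.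
set e := maxn (d + 1) (2 * (r - d) + 1).
set s := r - d in H *.
have hx : k ^ d * k <= k ^ e by rewrite -expnSr leq_pexp2l // -addn1 leq_maxl.
have hy : k ^ (2 * s) * k <= k ^ e by rewrite -expnSr leq_pexp2l // -addn1 leq_maxr.
have x1 : 0 < k ^ d by rewrite expn_gt0 k0.
have y1 : 0 < k ^ (2 * s) by rewrite expn_gt0 k0.
have sr : s <= r by rewrite /s leq_subr.
move: H hx hy x1 y1 sr.
generalize (k ^ d) (k ^ (2 * s)) (k ^ e). intros x y K.
move=> H hx hy x1 y1 sr.
have a1 : x * (2 * k + 4) <= 6 * K by nia.
have a2 : (k + 2) * y <= 3 * K by nia.
have a3 : s * (x * (2 * k + 4)) <= r * (6 * K) by apply: leq_mul.
have e4 : 4 * (k + 2) * (s * (y * t)) = (4 * s * t) * ((k + 2) * y) by lia.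
have a4 : 4 * (k + 2) * (s * (y * t)) <= (4 * s * t) * (3 * K) by rewrite e4 leq_mul2l a2 orbT.
have a4' : (4 * s * t) * (3 * K) <= (4 * r * t) * (3 * K) by rewrite !leq_mul2r leq_mul2l sr !orbT.
have K1 : 1 <= K by nia.
have a5 : d <= r * K by apply: (@leq_trans r); [lia | rewrite leq_pmulr].
have e5 : r * (7 + 12 * t) * K = r * K + r * (6 * K) + (4 * r * t) * (3 * K) by lia.
rewrite e5; lia.
Qed.

Lemma exists_col n r d t : r <= n -> 0 < r -> 0 < t ->
  has_local_coloring n r d t #|{set 'I_n}|.
Proof.
move=> rn r0 t0.
exists (fun (_ : 'I_n) (e : {set 'I_n}) => nat_of_ord (enum_rank e)); split.
  by move=> v e _; exact: ltn_ord.
move=> E [sE [cE _]].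
have : 0 < #|E| by rewrite cE.
rewrite card_gt0 => /set0Pn [e eE].
have : 0 < #|e|.
  by have := subsetP sE e eE; rewrite inE => /eqP ->.
rewrite card_gt0 => /set0Pn [u ue].
exists u; first by apply/bigcupP; exists e.
by move=> x y _ _ /val_inj /enum_rank_inj.
Qed.

Lemma C_sun_col n r d t : (exists k, has_local_coloring n r d t k) ->
  has_local_coloring n r d t (C_sun n r d t).
Proof.
move=> [k Hk]; rewrite /C_sun.
case: excluded_middle_informative => [H | H].
  case: ex_minnP => m Hm _; move: Hm; rewrite /has_local_coloringb.
  by case: excluded_middle_informative.
exfalso; apply: H; exists k; rewrite /has_local_coloringb.
by case: excluded_middle_informative.
Qed.

Lemma k_pos n r d t k f : 0 < r -> r <= n -> local_coloring n r d t k f -> 0 < k.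
Proof.
move=> r0 rn [fk _].
have h : r <= #|[set: 'I_n]| by rewrite cardsT card_ord.
have [e _ ce] := sub_card h.
have : e \in rsets n r by rewrite inE ce.
have : 0 < #|e| by rewrite ce.
rewrite card_gt0 => /set0Pn [v _].
move/(fk v e) => h'.
by case: k h' fk.
Qed.

From Stdlib Require Import Reals.
Open Scope R_scope.

Lemma powE (k e : nat) : Nat.pow k e = expn k e.
Proof. by elim: e => [|e IH] //=; rewrite expnS IH multE. Qed.

Lemma real_bound (n k e B : nat) : leq 1 n -> leq 1 k -> leq 1 e -> leq 1 B ->
  leq n (muln B (expn k e)) -> / INR B * Rpower (INR n) (/ INR e) <= INR k.
Proof.
move=> n1 k1 e1 B1 H.
have Hn : 0 < INR n by apply: lt_0_INR; apply/ltP.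
have Hk : 0 < INR k by apply: lt_0_INR; apply/ltP.
have He : 0 < INR e by apply: lt_0_INR; apply/ltP.
have HB : 1 <= INR B by apply: (le_INR 1); apply/leP.
have HR : INR n <= INR B * INR k ^ e.
  rewrite -pow_INR -mult_INR; apply: le_INR; apply/leP; by rewrite powE multE.
have H1 : Rpower (INR n) (/ INR e) <= Rpower (INR B * INR k ^ e) (/ INR e).
  apply: Rle_Rpower_l; [left; apply: Rinv_0_lt_compat => // | split => //].
rewrite -Rpower_mult_distr in H1; [| lra | apply: pow_lt => //].
rewrite -(Rpower_pow _ _ Hk) Rpower_mult Rinv_r in H1; last by lra.
rewrite Rpower_1 in H1 => //.
have H2 : Rpower (INR B) (/ INR e) <= INR B.
  rewrite -{2}(Rpower_1 (INR B)); last by lra.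
  apply: Rle_Rpower => //.
  have : 1 <= INR e by apply: (le_INR 1); apply/leP.
  move=> h; rewrite -Rinv_1; apply: Rinv_le_contravar; lra.
have H3 : Rpower (INR n) (/ INR e) <= INR B * INR k.
  apply: (Rle_trans _ _ _ H1); apply: Rmult_le_compat_r; lra.
have HB0 : 0 < / INR B by apply: Rinv_0_lt_compat; lra.
apply: (Rle_trans _ (/ INR B * (INR B * INR k))).
  by apply: Rmult_le_compat_l => //; lra.
rewrite -Rmult_assoc Rinv_l; lra.
Qed.

Theorem theorem4 :
  forall t r : nat, leq 4 t -> leq 3 r ->
  exists c : R, 0 < c /\
    forall d n : nat, leq d (r - 1)%nat -> leq r n ->
      Rmin (c * Rpower (INR n) (/ INR (2 * (r - d) + 1)%nat))
           (c * Rpower (INR n) (/ INR (d + 1)%nat))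
      <= INR (C_sun n r d t).
Proof.
move=> t r t4 r3.
have B1 : leq 1 (muln r (addn 7 (muln 12 t))).
  by rewrite muln_gt0 (leq_trans _ r3) //.
exists (/ INR (muln r (addn 7 (muln 12 t)))); split.
  apply: Rinv_0_lt_compat; apply: lt_0_INR; apply/ltP; exact: B1.
move=> d n dr rn.
have dr' : (d < r)%nat by move: dr r3; clear; lia.
have r0 : (0 < r)%nat by move: r3; clear; lia.
have t0 : (0 < t)%nat by move: t4; clear; lia.
have [f Hf] := @C_sun_col n r d t (ex_intro _ _ (@exists_col n r d t rn r0 t0)).
set k := C_sun n r d t in Hf *.
have k0 := @k_pos n r d t k f r0 rn Hf.
have Hb := @nat_bound n r d t k dr' k0 (@main_comb n r d t k f t4 dr' Hf k0).
have n1 : leq 1 n by move: rn r3; clear; lia.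
case: (leqP (d + 1) (2 * (r - d) + 1)) => hle.
  rewrite (maxn_idPr hle) in Hb.
  apply: Rle_trans (Rmin_l _ _) _.
  apply: real_bound => //; by rewrite addn1.
rewrite (maxn_idPl (ltnW hle)) in Hb.
apply: Rle_trans (Rmin_r _ _) _.
apply: real_bound => //; by rewrite addn1.
Qed.
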